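(* There is a signature $\tau$ and a first-order sentence $\varphi$ over $\tau$ such that $\varphi$ is preserved under globally-homomorphic preimages in the finite (for all finite $\tau$-structures $\mathcal{A},\mathcal{B}$, if $\mathcal{A}\Rightarrow\mathcal{B}$ and $\mathcal{B}\models\varphi$ then $\mathcal{A}\models\varphi$), but $\varphi$ is not equivalent over finite structures to any finite set of generalized dependencies.
   Context: Signatures are relational (constant and relation symbols). A generalized dependency (GD) is a sentence $\forall\vec{x}(\phi(\vec{x})\rightarrow\exists\vec{y}(\psi_1\vee\cdots\vee\psi_n))$, $n\ge0$, with $\phi,\psi_i$ conjunctions of atomic formulas (equalities allowed; for $n=0$ the head is $\bot$). For $a_1,\dots,a_k\in A$, $(\mathcal{A},a_1,\dots,a_k)$ is the expansion interpreting fresh constant symbols as $a_1,\dots,a_k$. $\mathcal{A}\rightleftarrows\mathcal{B}$ means there are homomorphisms (maps preserving constants and relations) in both directions. $\mathcal{A}\Rightarrow\mathcal{B}$ means there is a function $\pi$ mapping every finite tuple $\vec a$ over $A$ to a tuple $\pi(\vec a)$ over $B$ of the same length with $(\mathcal{A},\vec{a})\rightleftarrows(\mathcal{B},\pi(\vec{a}))$. ''Equivalent over finite structures'' means having the same finite models. *)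

(* Defs.v *)
From mathcomp Require Import all_boot.
From Stdlib Require List.
Set Implicit Arguments. Unset Strict Implicit. Unset Printing Implicit Defensive.

Record signature := Signature {
  nconst : nat;
  nrel : nat;
  arity : 'I_nrel -> nat
}.

Record fstructure (s : signature) := FStructure {
  carrier :> finType;
  cst : 'I_(nconst s) -> carrier;
  rel : forall r : 'I_(nrel s), ('I_(arity r) -> carrier) -> Prop
}.
Arguments cst {s} f _ : rename.
Arguments rel {s} f r _ : rename.

Definition nonempty_struct s (A : fstructure s) : Prop := 0 < #|A|.

Definition is_hom s (A B : fstructure s) (h : A -> B) : Prop :=
  (forall c, h (cst A c) = cst B c) /\
  (forall r (t : 'I_(arity r) -> A), rel A r t -> rel B r (fun i => h (t i))).

(* hom from (A, a_1..a_k) to (B, b_1..b_k): fresh constants interpreted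
   as the a_i resp. b_i must be preserved *)
Definition hom_exp s (A B : fstructure s) k (a : 'I_k -> A) (b : 'I_k -> B) : Prop :=
  exists h : A -> B, is_hom h /\ forall i, h (a i) = b i.

Definition hom_equiv s (A B : fstructure s) k (a : 'I_k -> A) (b : 'I_k -> B) : Prop :=
  hom_exp a b /\ hom_exp b a.

Definition glob_hom s (A B : fstructure s) : Prop :=
  exists pi : forall k, ('I_k -> A) -> ('I_k -> B),
    forall k (a : 'I_k -> A), hom_equiv a (pi k a).

Inductive term (s : signature) (V : Type) :=
| TVar : V -> term s V
| TConst : 'I_(nconst s) -> term s V.

Inductive formula (s : signature) :=
| FFalse : formula s
| FRel : forall r : 'I_(nrel s), ('I_(arity r) -> term s nat) -> formula s
| FEq : term s nat -> term s nat -> formula s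
| FNot : formula s -> formula s
| FAnd : formula s -> formula s -> formula s
| FOr : formula s -> formula s -> formula s
| FImp : formula s -> formula s -> formula s
| FForall : nat -> formula s -> formula s
| FExists : nat -> formula s -> formula s.

Definition eval_term s (A : fstructure s) V (rho : V -> A) (t : term s V) : A :=
  match t with TVar v => rho v | TConst c => cst A c end.

Definition upd (T : Type) (rho : nat -> T) (x : nat) (a : T) : nat -> T :=
  fun y => if y == x then a else rho y.

Fixpoint sat s (A : fstructure s) (rho : nat -> A) (phi : formula s) : Prop :=
  match phi with
  | FFalse => False
  | FRel r t => rel A r (fun i => eval_term rho (t i))
  | FEq t1 t2 => eval_term rho t1 = eval_term rho t2
  | FNot p => ~ @sat s A rho p
  | FAnd p q => @sat s A rho p /\ @sat s A rho q
  | FOr p q => @sat s A rho p \/ @sat s A rho q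
  | FImp p q => @sat s A rho p -> @sat s A rho q
  | FForall x p => forall a : A, @sat s A (upd rho x a) p
  | FExists x p => exists a : A, @sat s A (upd rho x a) p
  end.

Definition term_has_var s (x : nat) (t : term s nat) : bool :=
  match t with TVar y => y == x | TConst _ => false end.

Fixpoint free_in s (x : nat) (phi : formula s) : bool :=
  match phi with
  | FFalse => false
  | FRel r t => [exists i, term_has_var x (t i)]
  | FEq t1 t2 => term_has_var x t1 || term_has_var x t2
  | FNot p => @free_in s x p
  | FAnd p q | FOr p q | FImp p q => @free_in s x p || @free_in s x q
  | FForall y p | FExists y p => (y != x) && @free_in s x p
  end.

Definition sentence s (phi : formula s) : Prop := forall x, ~~ free_in x phi.

Definition models s (A : fstructure s) (phi : formula s) : Prop :=
  forall rho : nat -> A, @sat s A rho phi.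

Inductive atom (s : signature) (V : Type) :=
| ARel : forall r : 'I_(nrel s), ('I_(arity r) -> term s V) -> atom s V
| AEq : term s V -> term s V -> atom s V.

Definition sat_atom s (A : fstructure s) V (rho : V -> A) (alpha : atom s V) : Prop :=
  match alpha with
  | ARel r t => rel A r (fun i => eval_term rho (t i))
  | AEq t1 t2 => eval_term rho t1 = eval_term rho t2
  end.

(* forall x_1..x_nx ( /\ body -> exists y_1..y_ny ( \/_j /\ heads_j ) );
   body and each head are conjunctions (lists) of atoms; heads = [::] is bot. *)
Record gd (s : signature) := GD {
  gd_nx : nat;
  gd_ny : nat;
  gd_body : seq (atom s 'I_gd_nx);
  gd_heads : seq (seq (atom s ('I_gd_nx + 'I_gd_ny)%type))
}.

Definition sat_gd s (A : fstructure s) (g : gd s) : Prop :=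
  forall a : 'I_(gd_nx g) -> A,
    (forall alpha, List.In alpha (gd_body g) -> sat_atom a alpha) ->
    exists b : 'I_(gd_ny g) -> A,
      exists2 psi, List.In psi (gd_heads g) &
        forall alpha, List.In alpha psi ->
          sat_atom (fun v => match v with inl i => a i | inr j => b j end) alpha.

Definition models_gds s (A : fstructure s) (Sigma : seq (gd s)) : Prop :=
  forall g, List.In g Sigma -> sat_gd A g.

Definition preserved_glob_hom_preimages s (phi : formula s) : Prop :=
  forall A B : fstructure s, nonempty_struct A -> nonempty_struct B ->
    glob_hom A B -> models B phi -> models A phi.

Definition fin_equiv_gds s (phi : formula s) (Sigma : seq (gd s)) : Prop :=
  forall A : fstructure s, nonempty_struct A -> (models A phi <-> models_gds A Sigma).

(* Main.v *)
Require Import Defs.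
From mathcomp Require Import all_boot.
From Stdlib Require Import FunctionalExtensionality.
From mathcomp Require Import zify.
Set Implicit Arguments. Unset Strict Implicit. Unset Printing Implicit Defensive.

Lemma eval_hom s (A B : fstructure s) (h : A -> B) V (rho : V -> A) (t : term s V) :
  is_hom h -> eval_term (fun v => h (rho v)) t = h (eval_term rho t).
Proof. by case=> Hc _; case: t => [v|c] //=; rewrite Hc. Qed.

Lemma hom_atom s (A B : fstructure s) (h : A -> B) V (rho : V -> A) (al : atom s V) :
  is_hom h -> sat_atom rho al -> sat_atom (fun v => h (rho v)) al.
Proof.
move=> Hh; case: al => [r t|t1 t2] /=.
- move=> H; have := (proj2 Hh) r _ H.
  have -> : (fun i => h (eval_term rho (t i))) = (fun i => eval_term (fun v => h (rho v)) (t i)).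
    by apply: functional_extensionality => i; rewrite eval_hom.
  by [].
- by move=> E; rewrite !eval_hom // E.
Qed.

Lemma transfer s (A B : fstructure s) (f : A -> B) (g : B -> A) (G : gd s)
  (a : 'I_(gd_nx G) -> A) :
  is_hom f -> is_hom g -> (forall i, g (f (a i)) = a i) -> sat_gd B G ->
  (forall alpha, List.In alpha (gd_body G) -> sat_atom a alpha) ->
  exists b : 'I_(gd_ny G) -> A,
      exists2 psi, List.In psi (gd_heads G) &
        forall alpha, List.In alpha psi ->
          sat_atom (fun v => match v with inl i => a i | inr j => b j end) alpha.
Proof.
move=> Hf Hg Hgf HB Hbody.
have [b' [psi Hpsi Hat]] := HB (fun i => f (a i)) (fun al Hal => hom_atom Hf (Hbody al Hal)).
exists (fun j => g (b' j)), psi => // al Hal.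
have := hom_atom Hg (Hat al Hal).
have -> : (fun v => g (match v with inl i => f (a i) | inr j => b' j end)) =
  (fun v => match v with inl i => a i | inr j => g (b' j) end).
  by apply: functional_extensionality => -[i|j] //; rewrite Hgf.
by [].
Qed.

Definition sig1 := @Signature 0 1 (fun _ => 2).
Definition r0 : 'I_(nrel sig1) := ord0.
Definition tt0 : 'I_(arity r0) -> term sig1 nat :=
  fun i => @TVar sig1 nat (if val i == 0 then 0 else 1).
Definition phi0 : formula sig1 := FExists 0 (FForall 1 (FRel tt0)).

Definition i1 : 'I_2 := @Ordinal 2 1 isT.
Definition EA N (p q : ('I_N.+1 * bool)%type) : Prop := (p.1 != q.1) || (p.2 == q.2).

Definition SA N : fstructure sig1 :=
  @FStructure sig1 ('I_N.+1 * bool)%type (fun _ => (ord0, false))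
    (fun r (t : 'I_2 -> _) => EA (t ord0) (t i1)).

Definition SB N : fstructure sig1 :=
  @FStructure sig1 (option ('I_N.+1 * bool))%type (fun _ => None)
    (fun r (t : 'I_2 -> _) => match t ord0, t i1 with
                              | Some x, Some y => EA x y | _, _ => True end).

Lemma phi0_sentence : sentence phi0.
Proof.
move=> x /=; case: x => [|[|x]] //=; apply/negP => /existsP [i].
by case: (val i == 0).
Qed.

Lemma models_phi0 (A : fstructure sig1) :
  models A phi0 <-> forall rho : nat -> A, exists y, forall z : A, Defs.rel A r0 (fun i => if val i == 0 then y else z).
Proof.
rewrite /models /=.
have E : forall (rho : nat -> A) y z, (fun i : 'I_(arity r0) => eval_term (upd (upd rho 0 y) 1 z) (tt0 i))
   = (fun i => if val i == 0 then y else z).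
  by move=> rho y z; apply: functional_extensionality => i; rewrite /tt0; case: (val i == 0).
by split => H rho; have [y Hy] := H rho; exists y => z; have := Hy z; rewrite E.
Qed.

Lemma phi0_preserved : preserved_glob_hom_preimages phi0.
Proof.
move=> A B _ _ [pi Hpi] /models_phi0 HB; apply/models_phi0 => rho.
pose a := fun j : 'I_#|A| => (enum_val j : A).
have [_ [g [Hg Hga]]] := Hpi _ a.
pose b0 := pi 1 (fun _ => rho 0) ord0.
have [y' Hy'] := HB (fun _ => b0).
exists (g y') => z.
have H := (proj2 Hg) r0 _ (Hy' (pi _ a (enum_rank z))).
have -> : (fun i : 'I_(arity r0) => if val i == 0 then g y' else z) =
   (fun i => g (if val i == 0 then y' else pi _ a (enum_rank z))).
  apply: functional_extensionality => i; case: (val i == 0) => //.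
  by rewrite Hga /a enum_rankK.
exact: H.
Qed.

Lemma SB_phi0 N : models (SB N) phi0.
Proof. by apply/models_phi0 => rho; exists None => z; rewrite /= ; case: z. Qed.

Lemma SA_not_phi0 N : ~ models (SA N) phi0.
Proof.
move/models_phi0 => /(_ (fun _ => (ord0, false))) [[m b]] /(_ (m, ~~ b)).
by rewrite /= /EA /= eqxx /=; case: b.
Qed.

Lemma hom_Some N : is_hom (fun x : SA N => (Some x : SB N)).
Proof. by split => [[]|r t] //. Qed.

Lemma free_m0 N k (a : 'I_k -> SA N) : k <= N -> exists m0 : 'I_N.+1, forall i, (a i).1 != m0.
Proof.
move=> kN.
pose S := [set (a i).1 | i in 'I_k].
have HS : #|S| <= k by rewrite (leq_trans (leq_imset_card _ _)) // card_ord.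
have : 0 < #|~: S|.
  have E := cardsC S; rewrite card_ord in E; lia.
case/card_gt0P => m0; rewrite in_setC => Hm0; exists m0 => i.
by apply/eqP => E; move/negP: Hm0; apply; rewrite -E; apply/imsetP; exists i.
Qed.

Definition gmap N k (a : 'I_k -> SA N) (m0 : 'I_N.+1) (y : SB N) : SA N :=
  match y with
  | Some x => if [exists i, a i == x] then x else (m0, false)
  | None => (m0, false)
  end.

Lemma gmap_hom N k (a : 'I_k -> SA N) m0 : (forall i, (a i).1 != m0) -> is_hom (gmap a m0).
Proof.
move=> Hm; split => [[]|r t] //=.
have Hin : forall x, [exists i, a i == x] -> EA x (m0, false) /\ EA (m0, false) x.
  move=> x /existsP [i /eqP <-]; rewrite /EA /=; by split; apply/orP; left; [exact: Hm | rewrite eq_sym; exact: Hm].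
have Hw : EA (m0, false) (m0, false) by rewrite /EA /= eqxx orbT.
case: (t ord0) => [x|]; case: (t i1) => [y|] //=.
- move=> Hxy; case Ex: [exists i, a i == x]; case Ey: [exists i, a i == y] => //=.
  + exact: (Hin _ Ex).1.
  + exact: (Hin _ Ey).2.
- by move=> _; case Ex: [exists i, a i == x] => //=; exact: (Hin _ Ex).1.
- by move=> _; case Ey: [exists i, a i == y] => //=; exact: (Hin _ Ey).2.
Qed.

Lemma max_in (Sigma : seq (gd sig1)) G :
  List.In G Sigma -> gd_nx G <= foldr maxn 0 (map (fun g : gd sig1 => gd_nx g) Sigma).
Proof.
elim: Sigma => //= g S IH [->|H]; first exact: leq_maxl.
exact: leq_trans (IH H) (leq_maxr _ _).
Qed.

Theorem theorem2 :
  exists (s : signature) (phi : formula s),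
    sentence phi /\
    preserved_glob_hom_preimages phi /\
    ~ (exists Sigma : seq (gd s), fin_equiv_gds phi Sigma).
Proof.
exists sig1, phi0; split; first exact: phi0_sentence.
split; first exact: phi0_preserved.
move=> [Sigma HS].
set N := foldr maxn 0 (map (fun g : gd sig1 => gd_nx g) Sigma).
have nA : nonempty_struct (SA N) by apply/card_gt0P; exists (ord0, false).
have nB : nonempty_struct (SB N) by apply/card_gt0P; exists None.
apply: (@SA_not_phi0 N); apply/(HS _ nA) => G HG.
have HBG := (proj1 (HS _ nB) (@SB_phi0 N)) G HG.
move=> a Hbody.
have [m0 Hm0] := free_m0 a (max_in HG).
apply: (transfer (@hom_Some N) (gmap_hom Hm0)) => // i.
by rewrite /gmap; have -> : [exists j, a j == a i] by apply/existsP; exists i.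
Qed.
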